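(* For $i\in\{0,1,\dots,m\}$ let $q_i(y)=y^\top A_iy+2b_i^\top y+c_i$ with $A_i\in\mathbb{S}^{n-1}$, $b_i\in\mathbb{R}^{n-1}$, $c_i\in\mathbb{R}$. For $i\in\{1,\dots,m\}$ let $M_i=\begin{pmatrix}c_i & b_i^\top\\ b_i & A_i\end{pmatrix}$, $\mathcal{M}=\{M_1,\dots,M_m\}$, and $\mathcal{Y}=\{y\in\mathbb{R}^{n-1}:q_i(y)\ge0\ \forall i\in\{1,\dots,m\}\}$. Suppose there exists $\lambda^*\in\mathbb{R}^m_+$ such that $A_0-\sum_{i=1}^m\lambda^*_iA_i$ is positive semidefinite. If $\mathcal{S}(\mathcal{M})$ is rank-one generated, then the closed convex hull of $\mathrm{epi}=\{(y,t)\in\mathbb{R}^{n-1}\times\mathbb{R}: q_0(y)\le t,\ y\in\mathcal{Y}\}$ is $$\mathrm{clconv}(\mathrm{epi})=\mathrm{cl}\left(\left\{(y,t):\ \exists\,Y\succeq yy^\top,\ \langle A_0,Y\rangle+2\langle b_0,y\rangle+c_0\le t,\ \langle A_i,Y\rangle+2\langle b_i,y\rangle+c_i\ge0\ \forall i\in\{1,\dots,m\}\right\}\right).$$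
   Context: $\mathbb{S}^n$ denotes real symmetric $n\times n$ matrices with $\langle A,B\rangle=\mathrm{tr}(AB)$, $\mathbb{S}^n_+$ the PSD cone, $Y\succeq Z$ means $Y-Z$ is PSD, $\mathrm{cl}$ is closure and $\mathrm{clconv}$ closed convex hull. For $\mathcal{M}\subseteq\mathbb{S}^n$, $\mathcal{S}(\mathcal{M})=\{X\in\mathbb{S}^n_+:\langle M,X\rangle\ge0\ \forall M\in\mathcal{M}\}$. A closed convex cone $\mathcal{S}\subseteq\mathbb{S}^n_+$ is rank-one generated (ROG) if $\mathcal{S}=\mathrm{conv}(\mathcal{S}\cap\{xx^\top:x\in\mathbb{R}^n\})$. *)

(* Defs.v *)
From HB Require Import structures.
From mathcomp Require Import all_boot all_order all_algebra.
From mathcomp Require Import all_classical all_reals all_analysis.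
Set Implicit Arguments. Unset Strict Implicit. Unset Printing Implicit Defensive.
Import Order.TTheory GRing.Theory Num.Theory.
Import numFieldNormedType.Exports.
Local Open Scope classical_set_scope.
Local Open Scope ring_scope.

Definition psd {R : realType} {n : nat} (X : 'M[R]_n) : Prop :=
  X^T = X /\ forall x : 'cV[R]_n, 0 <= (x^T *m X *m x) 0 0.

Definition minner {R : realType} {n : nat} (A B : 'M[R]_n) : R := \tr (A *m B).

Definition SM {R : realType} {n m : nat} (M : 'I_m -> 'M[R]_n) : set 'M[R]_n :=
  [set X | psd X /\ forall i, 0 <= minner (M i) X].

Definition convhull {R : realType} {V : lmodType R} (E : set V) : set V :=
  [set x | exists (k : nat) (w : 'I_k -> R) (p : 'I_k -> V),
     (forall i, 0 <= w i) /\ \sum_i w i = 1 /\ (forall i, E (p i)) /\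
     x = \sum_i w i *: p i].

Definition ROG {R : realType} {n : nat} (S : set 'M[R]_n) : Prop :=
  S = convhull (S `&` [set X | exists x : 'cV[R]_n, X = x *m x^T]).

Definition quad {R : realType} {d : nat} (A : 'M[R]_d) (b : 'cV[R]_d) (c : R)
  (y : 'cV[R]_d) : R := (y^T *m A *m y) 0 0 + 2 * (b^T *m y) 0 0 + c.

Definition homog {R : realType} {d : nat} (A : 'M[R]_d) (b : 'cV[R]_d) (c : R)
  : 'M[R]_(1 + d) := block_mx (c%:M : 'M[R]_1) b^T b A.

(* Main.v *)
Require Import Defs.
From HB Require Import structures.
From mathcomp Require Import all_boot all_order all_algebra.
From mathcomp Require Import all_classical all_reals all_analysis.
From mathcomp Require Import ring lra.
Import Order.TTheory GRing.Theory Num.Theory.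
Import numFieldNormedType.Exports.
Local Open Scope classical_set_scope.
Local Open Scope ring_scope.

Section Aux.
Variable R : realType.

Lemma tr11 (M : 'M[R]_1) : \tr M = M 0 0.
Proof. by rewrite /mxtrace big_ord1. Qed.

Lemma mul11 (P Q : 'M[R]_1) : (P *m Q) 0 0 = P 0 0 * Q 0 0.
Proof. by rewrite mxE big_ord1. Qed.

Lemma tr11T (M : 'M[R]_1) : M^T 0 0 = M 0 0.
Proof. by rewrite mxE. Qed.

Lemma minner_outer n (M : 'M[R]_n) (x : 'cV[R]_n) :
  minner M (x *m x^T) = (x^T *m M *m x) 0 0.
Proof. by rewrite /minner mulmxA mxtrace_mulC mulmxA tr11. Qed.

Lemma bT_sym n (b y : 'cV[R]_n) : (y^T *m b) 0 0 = (b^T *m y) 0 0.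
Proof. by rewrite -tr11T trmx_mul trmxK. Qed.

Lemma homogQ d (A : 'M[R]_d) (b : 'cV[R]_d) (c : R) (x : 'cV[R]_(1 + d)) :
  (x^T *m homog A b c *m x) 0 0 =
  (usubmx x 0 0)^+2 * c + 2 * (usubmx x 0 0) * (b^T *m dsubmx x) 0 0
  + ((dsubmx x)^T *m A *m dsubmx x) 0 0.
Proof.
rewrite -[in LHS](vsubmxK x) tr_col_mx /homog mul_row_block mul_row_col.
rewrite [usubmx x]mx11_scalar tr_scalar_mx.
set s := usubmx x 0 0; set z := dsubmx x.
rewrite !mul_scalar_mx !mul_mx_scalar mxE.
rewrite !mxE !eqxx !mulr1n.
have -> : \sum_j z^T 0 j * b j 0 = \sum_j b^T 0 j * z j 0.
  by apply: eq_bigr => j _; rewrite !mxE mulrC.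
set S := \sum_j b^T 0 j * z j 0.
have -> : \sum_j (s *: b^T + z^T *m A) 0 j * z j 0 =
   s * S + \sum_j (z^T *m A) 0 j * z j 0.
  rewrite /S mulr_sumr -big_split; apply: eq_bigr => j _; by rewrite !mxE /= mulrDl mulrA.
ring.
Qed.
Lemma minner_homog d (A Y : 'M[R]_d) (b y : 'cV[R]_d) (c : R) :
  minner (homog A b c) (homog Y y 1) = \tr (A *m Y) + 2 * (b^T *m y) 0 0 + c.
Proof.
rewrite /minner /homog mulmx_block mxtrace_block mulmx1 !mxtraceD.
rewrite (tr11 (c%:M)) (tr11 (b^T *m y)) (mxtrace_mulC b) (tr11 (y^T *m b)) bT_sym.
rewrite mxE /=; ring.
Qed.

Lemma outer_homog d (x : 'cV[R]_(1 + d)) :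
  x *m x^T = homog (dsubmx x *m (dsubmx x)^T) (usubmx x 0 0 *: dsubmx x)
     ((usubmx x 0 0)^+2).
Proof.
rewrite -[in LHS](vsubmxK x) tr_col_mx mul_col_row [usubmx x]mx11_scalar.
rewrite tr_scalar_mx -scalar_mxM mul_mx_scalar mul_scalar_mx /homog linearZ /=.
by rewrite -expr2 !mxE.
Qed.

Lemma homog_sum d k (w : 'I_k -> R) (A : 'I_k -> 'M[R]_d) (b : 'I_k -> 'cV[R]_d)
  (c : 'I_k -> R) :
  \sum_j w j *: homog (A j) (b j) (c j) =
  homog (\sum_j w j *: A j) (\sum_j w j *: b j) (\sum_j w j * c j).
Proof.
elim: k w A b c => [|k IH] w A b c.
  by rewrite !big_ord0 /homog !raddf0 block_mx0.
rewrite !big_ord_recr /= IH /homog scale_block_mx add_block_mx.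
by rewrite linearD linearZ /= scale_scalar_mx raddfD.
Qed.

Lemma homog_inj d (A A' : 'M[R]_d) (b b' : 'cV[R]_d) (c c' : R) :
  homog A b c = homog A' b' c' -> [/\ A = A', b = b' & c = c'].
Proof.
move=> /eq_block_mx [h1 _ h3 h4]; split => //.
by move: (congr1 (fun M : 'M[R]_1 => M 0 0) h1); rewrite /= !mxE.
Qed.

Lemma entryB m n (P Q : 'M[R]_(m, n)) i j : (P - Q) i j = P i j - Q i j.
Proof. by rewrite !mxE. Qed.
Lemma entryZ m n a (P : 'M[R]_(m, n)) i j : (a *: P) i j = a * P i j.
Proof. by rewrite mxE. Qed.

Definition qf {n} (z : 'cV[R]_n) (M : 'M[R]_n) := (z^T *m M *m z) 0 0.

Lemma qfB n (z : 'cV[R]_n) (M N : 'M[R]_n) : qf z (M - N) = qf z M - qf z N.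
Proof. by rewrite /qf mulmxBr mulmxBl entryB. Qed.

Lemma qf_sumZ n (z : 'cV[R]_n) k (w : 'I_k -> R) (M : 'I_k -> 'M[R]_n) :
  qf z (\sum_j w j *: M j) = \sum_j w j * qf z (M j).
Proof.
rewrite /qf mulmx_sumr mulmx_suml summxE; apply: eq_bigr => j _.
by rewrite -scalemxAr -scalemxAl entryZ.
Qed.

Lemma qf_outer n (z y : 'cV[R]_n) : qf z (y *m y^T) = ((y^T *m z) 0 0)^+2.
Proof. by rewrite /qf mulmxA -mulmxA (mul11 (z^T *m y)) bT_sym expr2. Qed.

Lemma bT_sum n (b : 'cV[R]_n) k (w : 'I_k -> R) (v : 'I_k -> 'cV[R]_n) :
  (b^T *m \sum_j w j *: v j) 0 0 = \sum_j w j * (b^T *m v j) 0 0.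
Proof.
by rewrite mulmx_sumr summxE; apply: eq_bigr => j _; rewrite -scalemxAr entryZ.
Qed.

Lemma minner_sumZ n (A : 'M[R]_n) k (w : 'I_k -> R) (M : 'I_k -> 'M[R]_n) :
  minner A (\sum_j w j *: M j) = \sum_j w j * minner A (M j).
Proof.
rewrite /minner mulmx_sumr raddf_sum; apply: eq_bigr => j _.
by rewrite /= -scalemxAr mxtraceZ.
Qed.

Lemma relax_sum d (A : 'M[R]_d) (b : 'cV[R]_d) (c : R) k (w : 'I_k -> R)
  (z v : 'I_k -> 'cV[R]_d) (r : 'I_k -> R) :
  minner A (\sum_j w j *: (z j *m (z j)^T)) + 2 * (b^T *m \sum_j w j *: v j) 0 0
   + c * \sum_j w j * r j =
  \sum_j w j * (((z j)^T *m A *m z j) 0 0 + 2 * (b^T *m v j) 0 0 + c * r j).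
Proof.
rewrite minner_sumZ bT_sum !mulr_sumr -!big_split /=; apply: eq_bigr => j _.
rewrite minner_outer; ring.
Qed.

Lemma jensen k (w a : 'I_k -> R) : (forall j, 0 <= w j) -> \sum_j w j = 1 ->
  (\sum_j w j * a j)^+2 <= \sum_j w j * a j ^+ 2.
Proof.
move=> w0 w1; set M := \sum_j w j * a j.
have E : \sum_j w j * (a j - M)^+2 =
    \sum_j w j * a j ^+2 - \sum_j (2 * M * (w j * a j)) + \sum_j (M^+2 * w j).
  by rewrite -sumrB -big_split /=; apply: eq_bigr => j _; ring.
rewrite -!mulr_sumr -/M w1 in E.
have : 0 <= \sum_j w j * (a j - M)^+2.
  by apply: sumr_ge0 => j _; rewrite mulr_ge0 // sqr_ge0.
rewrite E; lra.
Qed.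

Lemma psd_homog d (Y : 'M[R]_d) (y : 'cV[R]_d) :
  psd (Y - y *m y^T) -> psd (homog Y y 1).
Proof.
move=> [hs hq].
have YT : Y^T = Y.
  by move: hs; rewrite linearB /= trmx_mul trmxK => /addIr.
split; first by rewrite /homog tr_block_mx YT trmxK tr_scalar_mx.
move=> x; rewrite homogQ.
have := hq (dsubmx x); rewrite -/(qf _ _) qfB qf_outer /qf bT_sym.
set s := usubmx x 0 0; set u := ((dsubmx x)^T *m y) 0 0.
move=> h; have := sqr_ge0 (s + u); nra.
Qed.

Lemma scal_quad d (A : 'M[R]_d) (b : 'cV[R]_d) (c s : R) (z : 'cV[R]_d) :
  s != 0 -> s^+2 * quad A b c (s^-1 *: z) =
  (z^T *m A *m z) 0 0 + 2 * s * (b^T *m z) 0 0 + s^+2 * c.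
Proof.
move=> s0; rewrite /quad linearZ /= [(s^-1 *: z)^T]linearZ /= -!scalemxAl -!scalemxAr !entryZ.
by field.
Qed.

Lemma pair_sum d k (w : 'I_k -> R) (p : 'I_k -> 'cV[R]_d * R) :
  \sum_j w j *: p j = (\sum_j w j *: (p j).1, \sum_j w j * (p j).2).
Proof.
elim: k w p => [|k IH] w p; first by rewrite !big_ord0.
by rewrite !big_ord_recr /= IH.
Qed.

End Aux.
Arguments qf {R n}.

Theorem corollary5p11 (R : realType) (d m : nat)
  (A0 : 'M[R]_d) (b0 : 'cV[R]_d) (c0 : R)
  (A : 'I_m -> 'M[R]_d) (b : 'I_m -> 'cV[R]_d) (c : 'I_m -> R) :
  A0^T = A0 -> (forall i, (A i)^T = A i) ->
  (exists lam : 'I_m -> R, (forall i, 0 <= lam i) /\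
      psd (A0 - \sum_i lam i *: A i)) ->
  ROG (SM (fun i => homog (A i) (b i) (c i))) ->
  closure (convhull [set p : 'cV[R]_d * R |
      quad A0 b0 c0 p.1 <= p.2 /\ forall i, 0 <= quad (A i) (b i) (c i) p.1] : set ('cV[R]_d * R))
  = closure [set p : 'cV[R]_d * R | exists Y : 'M[R]_d,
      psd (Y - p.1 *m p.1^T) /\
      minner A0 Y + 2 * (b0^T *m p.1) 0 0 + c0 <= p.2 /\
      forall i, 0 <= minner (A i) Y + 2 * ((b i)^T *m p.1) 0 0 + c i].
Proof.
move=> _ _ [lam [lam0 [_ hlam]]] hROG.
congr closure; apply/seteqP; split.
- move=> p [k [w [P [w0 [w1 [EP ->]]]]]].
  rewrite pair_sum /=.
  exists (\sum_j w j *: ((P j).1 *m (P j).1^T)); split; [|split].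
  + split.
      rewrite linearB /= linear_sum /= trmx_mul trmxK; congr (_ - _).
      by apply: eq_bigr => j _; rewrite linearZ /= trmx_mul trmxK.
    move=> x; rewrite -/(qf x _) qfB qf_sumZ qf_outer bT_sym bT_sum subr_ge0.
under [X in _ <= X]eq_bigr do rewrite qf_outer.
    under [X in X ^+ 2 <= _]eq_bigr do rewrite bT_sym.
    exact: jensen.
  + have := @relax_sum _ _ A0 b0 c0 _ w (fun j => (P j).1) (fun j => (P j).1) (fun _ => 1).
    have e1 : \sum_j w j * 1 = 1 by under eq_bigr do rewrite mulr1; exact: w1.
    rewrite e1 mulr1 => ->.
    apply: ler_sum => j _; rewrite ler_wpM2l //.
    exact: (EP j).1.
  + move=> i.
    have := @relax_sum _ _ (A i) (b i) (c i) _ w (fun j => (P j).1) (fun j => (P j).1) (fun _ => 1).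
    have e1 : \sum_j w j * 1 = 1 by under eq_bigr do rewrite mulr1; exact: w1.
    rewrite e1 mulr1 => ->.
    apply: sumr_ge0 => j _; rewrite mulr_ge0 //.
    exact: (EP j).2.
- move=> [y t] /= [Y [hY [hobj hcon]]].
  have SX : SM (fun i => homog (A i) (b i) (c i)) (homog Y y 1).
    split; first exact: psd_homog.
    by move=> i; rewrite minner_homog; exact: hcon.
  move: SX; rewrite hROG => -[k [w [P [w0 [w1 [HP HX]]]]]].
  have [xs hxs] : exists xs : 'I_k -> 'cV[R]_(1 + d),
      forall j, P j = xs j *m (xs j)^T.
    apply: (@fin_all_exists _ (fun _ => 'cV[R]_(1 + d)) (fun j x => P j = x *m x^T)) => j.
    by have [_ [x ->]] := HP j; exists x.
  pose s j := usubmx (xs j) 0 0.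
  pose z j := dsubmx (xs j).
  have : homog Y y 1 = homog (\sum_j w j *: (z j *m (z j)^T))
      (\sum_j w j *: (s j *: z j)) (\sum_j w j * (s j)^+2).
    by rewrite HX -homog_sum; apply: eq_bigr => j _; rewrite hxs outer_homog.
  move/homog_inj => [eY ey es].
  have HQ : forall i j, 0 <= ((z j)^T *m A i *m z j) 0 0
      + 2 * s j * ((b i)^T *m z j) 0 0 + (s j)^+2 * c i.
    move=> i j; have [[_ h] _] := HP j; have := h i.
    rewrite hxs minner_outer homogQ -/(s j) -/(z j); lra.
  have [j0 sj0] : exists j0, s j0 != 0.
    case: (pselect (exists j0, s j0 != 0)) => // hn; exfalso.
    have : \sum_j w j * (s j)^+2 = 0.
      apply: big1 => j _.
      have -> : s j = 0 by apply/eqP; apply/negPn/negP => hs; apply: hn; exists j.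
      by rewrite expr0n mulr0.
    by rewrite -es => /eqP; rewrite oner_eq0.
  have Q0nn : forall j, s j = 0 -> 0 <= ((z j)^T *m A0 *m z j) 0 0.
    move=> j sj; have := hlam (z j); rewrite -/(qf _ _) qfB qf_sumZ /qf => h.
    have : 0 <= \sum_i lam i * ((z j)^T *m A i *m z j) 0 0.
      apply: sumr_ge0 => i _; apply: mulr_ge0 => //.
      have := HQ i j; rewrite sj expr0n /= mulr0 !mul0r !addr0; lra.
    lra.
  pose yp j := if s j != 0 then (s j)^-1 *: z j else (s j0)^-1 *: z j0.
  pose mu j := w j * (s j)^+2.
  pose q0 j := quad A0 b0 c0 (yp j).
  pose dl := t - \sum_j mu j * q0 j.
  have gen : forall i j, s j != 0 -> 0 <= quad (A i) (b i) (c i) ((s j)^-1 *: z j).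
    move=> i j sj.
    have s2 : 0 < (s j)^+2 by rewrite exprn_even_gt0 //= sj orbT.
    rewrite -(pmulr_rge0 _ s2) scal_quad //; exact: HQ.
  have Hyp : forall i j, 0 <= quad (A i) (b i) (c i) (yp j).
    move=> i j; rewrite /yp; case: ifP => [sj|_]; exact: gen.
  have Hle : forall j, mu j * q0 j <= w j * (((z j)^T *m A0 *m z j) 0 0
      + 2 * (b0^T *m (s j *: z j)) 0 0 + c0 * (s j)^+2).
    move=> j; rewrite /mu /q0 /yp -scalemxAr entryZ.
    case: (boolP (s j != 0)) => sj.
      rewrite -mulrA scal_quad //.
      suff -> : ((z j)^T *m A0 *m z j) 0 0 + 2 * s j * (b0^T *m z j) 0 0 + s j ^+ 2 * c0
         = ((z j)^T *m A0 *m z j) 0 0 + 2 * (s j * (b0^T *m z j) 0 0) + c0 * s j ^+ 2 by [].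
      ring.
    have sj0' : s j = 0 by apply/eqP; rewrite -[_ == _]negbK sj.
    rewrite sj0' expr0n /= !mulr0 mul0r !addr0.
    rewrite mul0r mulr0 addr0; apply: mulr_ge0; [exact: w0 | exact: (Q0nn j sj0')].
  have dl0 : 0 <= dl.
    rewrite /dl subr_ge0; apply: le_trans (ler_sum _ (fun j _ => Hle j)) _.
    rewrite -(@relax_sum _ _ A0 b0 c0 _ w z (fun j => s j *: z j) (fun j => (s j)^+2)).
    by rewrite -eY -ey -es mulr1.
  exists k, mu, (fun j => (yp j, q0 j + dl)); split; [|split; [|split]].
  - by move=> j; rewrite /mu mulr_ge0 // sqr_ge0.
  - by rewrite /mu -es.
  - move=> j /=; split; last by move=> i; exact: Hyp.
    by rewrite /q0 lerDl.
  - rewrite pair_sum /=; congr pair.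
      rewrite ey; apply: eq_bigr => j _; rewrite /mu /yp.
      case: (boolP (s j != 0)) => sj.
        rewrite !scalerA; congr (_ *: _); field; exact: sj.
      have sj0' : s j = 0 by apply/eqP; rewrite -[_ == _]negbK sj.
      by rewrite sj0' expr0n /= mulr0 !scale0r scaler0.
    under eq_bigr do rewrite mulrDr.
    rewrite big_split /= -mulr_suml -es mul1r /dl; ring.
Qed.
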